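(* Let $H$ be a monoid. A set $X\in\mathcal{P}_{\mathrm{fin},1}(H)$ is irreducible but not an atom in $\mathcal{P}_{\mathrm{fin},1}(H)$ if and only if $X=\{1_H,x\}$ for some $x\in H$ such that $x^2=1_H$ or $x^2=x$.
   Context: For a monoid $H$, $\mathcal{P}_{\mathrm{fin},1}(H)$ denotes the set of all non-empty finite subsets of $H$ containing $1_H$, a monoid under $XY=\{xy:x\in X,y\in Y\}$ with identity $\{1_H\}$. In a monoid $M$: $x\mid_M y$ iff $y\in MxM=\{uxv:u,v\in M\}$; $x,y$ are associated if each divides the other; $x$ properly divides $y$ if $x\mid_M y$ and $y\nmid_M x$. A unit-divisor is an element dividing $1_M$; other elements are non-unit-divisors. An irreducible is a non-unit-divisor $a$ such that $a\neq xy$ for all non-unit-divisors $x,y$ properly dividing $a$. An atom is a non-unit-divisor that is not a product of two non-unit-divisors. *)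

(* Defs.v *)
From HB Require Import structures.
From mathcomp Require Import all_boot.
From mathcomp Require Import boolp classical_sets cardinality.
Set Implicit Arguments. Unset Strict Implicit. Unset Printing Implicit Defensive.
Local Open Scope classical_set_scope.
Local Open Scope group_scope.

Section PFin1.
Variable H : monoidType.

Definition Pfin1 (X : set H) : Prop := finite_set X /\ X 1.

Definition setmul (X Y : set H) : set H :=
  [set z | exists x y, X x /\ Y y /\ z = x * y].

Definition pdvd (X Y : set H) : Prop :=
  exists U V, Pfin1 U /\ Pfin1 V /\ Y = setmul (setmul U X) V.

Definition pproper_dvd (X Y : set H) : Prop := pdvd X Y /\ ~ pdvd Y X.

Definition punit_div (X : set H) : Prop := pdvd X [set 1].

Definition pirreducible (A : set H) : Prop :=
  Pfin1 A /\ ~ punit_div A /\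
  forall X Y, Pfin1 X -> Pfin1 Y -> ~ punit_div X -> ~ punit_div Y ->
    pproper_dvd X A -> pproper_dvd Y A -> A <> setmul X Y.

Definition patom (A : set H) : Prop :=
  Pfin1 A /\ ~ punit_div A /\
  forall X Y, Pfin1 X -> Pfin1 Y -> ~ punit_div X -> ~ punit_div Y ->
    A <> setmul X Y.
End PFin1.

(* Main.v *)
Require Import Defs.
From HB Require Import structures.
From mathcomp Require Import all_boot.
From mathcomp Require Import boolp classical_sets cardinality.
Local Open Scope classical_set_scope.
Local Open Scope group_scope.

Set Implicit Arguments.
Section Aux.
Variable H : monoidType.
Implicit Types X Y A : set H.

Lemma sm1l X : setmul [set 1] X = X.
Proof.
apply/seteqP; split => z /=.
- by move=> [x [y [-> [Yy ->]]]]; rewrite mul1g.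
- by move=> Xz; exists 1, z; rewrite mul1g.
Qed.

Lemma sm1r X : setmul X [set 1] = X.
Proof.
apply/seteqP; split => z /=.
- by move=> [x [y [Xx [-> ->]]]]; rewrite mulg1.
- by move=> Xz; exists z, 1; rewrite mulg1.
Qed.

Lemma P1 : Pfin1 [set (1 : H)].
Proof. by split; [apply: finite_set1|]. Qed.

Lemma sm_subl X Y : Y 1 -> X `<=` setmul X Y.
Proof. by move=> Y1 x Xx; exists x, 1; rewrite mulg1. Qed.

Lemma sm_subr X Y : X 1 -> Y `<=` setmul X Y.
Proof. by move=> X1 y Yy; exists 1, y; rewrite mul1g. Qed.

Lemma pdvd_sub X Y : pdvd X Y -> X `<=` Y.
Proof.
move=> [U [V [[_ U1] [[_ V1] ->]]]].
move=> x Xx; apply: sm_subl V1 _ _; exact: sm_subr.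
Qed.

Lemma pdvd_refl X : pdvd X X.
Proof. by exists [set 1], [set 1]; rewrite sm1l sm1r; split; [apply: P1|split; [apply: P1|]]. Qed.

Lemma pdvd_l X Y : Pfin1 Y -> pdvd X (setmul X Y).
Proof. by move=> PY; exists [set 1], Y; rewrite sm1l; split; [apply: P1|]. Qed.

Lemma nud_ex X : X 1 -> ~ punit_div X -> exists x, X x /\ x <> 1.
Proof.
move=> X1 nu; apply: contrapT => nex; apply: nu.
have -> : X = [set 1].
  apply/seteqP; split => z /=; last by move=> ->.
  by move=> Xz; apply: contrapT => nz; apply: nex; exists z.
exact: pdvd_refl.
Qed.

Lemma ex_nud X x : X x -> x <> 1 -> ~ punit_div X.
Proof. by move=> Xx nx /pdvd_sub /(_ x Xx). Qed.

Lemma pirr_eq X Y A : pirreducible A -> Pfin1 X -> Pfin1 Y ->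
  ~ punit_div X -> ~ punit_div Y -> A = setmul X Y -> X = A \/ Y = A.
Proof.
move=> [PA [nuA irr]] PX PY nX nY eA.
have sX : X `<=` A by rewrite eA; apply: sm_subl; case: PY.
have sY : Y `<=` A by rewrite eA; apply: sm_subr; case: PX.
apply: contrapT => /not_orP [nXA nYA].
apply: (irr X Y PX PY nX nY _ _ eA).
- split; first by rewrite eA; apply: pdvd_l.
  move=> /pdvd_sub sAX; apply: nXA; apply/seteqP; split => //.
- split; first by rewrite eA; exists X, [set 1]; rewrite sm1r; split => //; apply: P1.
  move=> /pdvd_sub sAY; apply: nYA; apply/seteqP; split => //.
Qed.

End Aux.

Theorem proposition2p3 (H : monoidType) (X : set H) :
  Pfin1 X ->
  (pirreducible X /\ ~ patom X <->
   exists x : H, x <> 1 /\ X = [set 1; x] /\ (x * x = 1 \/ x * x = x)).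
Proof.
move=> PA; split.
- move=> [irr nat].
  have [fA A1] := PA.
  have nuA : ~ punit_div X by case: irr => _ [].
  have [Y [Z [PY [PZ [nY [nZ eA]]]]]] : exists Y Z, Pfin1 Y /\ Pfin1 Z /\
      ~ punit_div Y /\ ~ punit_div Z /\ X = setmul Y Z.
    apply: contrapT => nex; apply: nat; split => //; split => //.
    move=> Y Z PY PZ nY nZ eA; apply: nex; exists Y, Z; do 4 split => //.
  have [y [Yy ny]] := nud_ex (proj2 PY) nY.
  have [z [Zz nz]] := nud_ex (proj2 PZ) nZ.
  case: (pirr_eq irr PY PZ nY nZ eA) => [eY|eZ].
  + (* X = X Z, so X z ⊆ X *)
    have Xz : X z by rewrite eA; exists 1, z; rewrite mul1g; split => //; case: PY.
    have XzX : forall a, X a -> X (a * z).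
      by move=> a Xa; rewrite eA; exists a, z; rewrite eY.
    case: (pselect (exists w, X w /\ w <> 1 /\ w <> z)) => [[w [Xw [w1 wz]]]|nw]; last first.
      exists z; split => //.
      have eX : X = [set 1; z].
        apply/seteqP; split => a /=.
        - move=> Xa; case: (pselect (a = 1)) => [->|a1]; first by left.
          case: (pselect (a = z)) => [->|az]; first by right.
          by exfalso; apply: nw; exists a.
        - by case=> ->.
      split => //.
      have : X (z * z) by apply: XzX.
      by rewrite {1}eX /= => -[] ->; [left|right].
    exfalso.
    pose X' := X `\ z.
    have sX' : X' `<=` X by move=> a [].
    have s2 : [set 1; z] `<=` X by move=> a /= [] ->.
    have PX' : Pfin1 X' by split; [exact: sub_finite_set sX' fA| split => //= /esym].
    have P2 : Pfin1 [set 1; z] by split; [exact: finite_set2|left].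
    have e : X = setmul X' [set 1; z].
      apply/seteqP; split => a.
      - move=> Xa; case: (pselect (a = z)) => [->|az].
        + by exists 1, z; rewrite mul1g; split; [split => //= /esym|split; [right|]].
        + by exists a, 1; rewrite mulg1; split; [split|split; [left|]].
      - move=> [b [c [[Xb _] [/= [] -> ->]]]]; first by rewrite mulg1.
        exact: XzX.
    case: (pirr_eq irr PX' P2 (ex_nud (x:=w) _ w1) (ex_nud (x:=z) _ nz) e).
    * by split => //= wz'; apply: wz.
    * by right.
    * move=> eX'; have : X' z by rewrite eX'.
      by case=> _; apply.
    * move=> eX2; have : [set 1; z] w by rewrite eX2.
      by move=> /= [].
  + (* X = Y X, so y X ⊆ X *)
    have Xy : X y by rewrite eA; exists y, 1; rewrite mulg1; split => //; split => //; case: PZ.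
    have XyX : forall a, X a -> X (y * a).
      by move=> a Xa; rewrite eA; exists y, a; rewrite eZ.
    case: (pselect (exists w, X w /\ w <> 1 /\ w <> y)) => [[w [Xw [w1 wy]]]|nw]; last first.
      exists y; split => //.
      have eX : X = [set 1; y].
        apply/seteqP; split => a /=.
        - move=> Xa; case: (pselect (a = 1)) => [->|a1]; first by left.
          case: (pselect (a = y)) => [->|ay]; first by right.
          by exfalso; apply: nw; exists a.
        - by case=> ->.
      split => //.
      have : X (y * y) by apply: XyX.
      by rewrite {1}eX /= => -[] ->; [left|right].
    exfalso.
    pose X' := X `\ y.
    have sX' : X' `<=` X by move=> a [].
    have s2 : [set 1; y] `<=` X by move=> a /= [] ->.
    have PX' : Pfin1 X' by split; [exact: sub_finite_set sX' fA| split => //= /esym].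
    have P2 : Pfin1 [set 1; y] by split; [exact: finite_set2|left].
    have e : X = setmul [set 1; y] X'.
      apply/seteqP; split => a.
      - move=> Xa; case: (pselect (a = y)) => [->|ay].
        + by exists y, 1; rewrite mulg1; split; [right|split; [split => //= /esym|]].
        + by exists 1, a; rewrite mul1g; split; [left|split; [split|]].
      - move=> [b [c [/= [] -> [[Xc _] ->]]]]; first by rewrite mul1g.
        exact: XyX.
    case: (pirr_eq irr P2 PX' (ex_nud (x:=y) _ ny) (ex_nud (x:=w) _ w1) e).
    * by right.
    * by split => //= wy'; apply: wy.
    * move=> eX2; have : [set 1; y] w by rewrite eX2.
      by move=> /= [].
    * move=> eX'; have : X' y by rewrite eX'.
      by case=> _; apply.
- move=> [x [x1 [eX xx]]].
  have Xx : X x by rewrite eX; right.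
  have nuA : ~ punit_div X := ex_nud Xx x1.
  have eXX : X = setmul X X.
    apply/seteqP; split => a.
    + by move=> Xa; exists a, 1; rewrite mulg1; split => //; split => //; case: PA.
    + rewrite {3}eX => -[b [c [/= Xb [Xc ->]]]].
      move: Xb Xc; rewrite eX /= => -[] -> [] ->; rewrite ?mul1g ?mulg1; try by [left|right].
      by case: xx => ->; [left|right].
  split.
  + split => //; split => //.
    move=> Y Z PY PZ nY nZ [dY ndY] _ e.
    apply: ndY.
    have [y [Yy ny]] := nud_ex (proj2 PY) nY.
    have sY := pdvd_sub dY.
    have : Y = X.
      apply/seteqP; split => // a; rewrite {1}eX /= => -[] ->; first by case: PY.
      by have := sY y Yy; rewrite eX /= => -[] // <-.
    by move=> ->; apply: pdvd_refl.
  + by move=> [_ [_ hat]]; exact: (hat X X PA PA nuA nuA eXX).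
Qed.
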